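(* Let $\lambda\in\mathbb{F}$ with $\lambda\neq0,1$, and let $0\le\delta\le1-q^{-1}$. Then $$\mathcal{D}_\lambda^{\le\delta}\subseteq\bigcup_{\mu_q(n)\le\ell<n}\ \bigcup_{J\in\Omega_\ell}\ \bigcup_{(a,b)\in(\tilde J^*\times\tilde J^* )^{\le\delta}}\mathcal{D}_{a,b}.$$
   Context: Let $q$ be a prime power, $\mathbb{F}=\mathbb{F}_{q^2}$, $G$ a finite abelian group of odd order $n$ with $\gcd(n,q)=1$, and $\mathbb{F}G$ its group algebra; scalars are identified with multiples of $1_G$. Let $\tau:\mathbb{F}G\to\mathbb{F}G$, $\sum_g\alpha_g g\mapsto\sum_g\alpha_g^q g^{-1}$. Let $e_0=\frac1n\sum_g g$. The primitive idempotents are $e_0$; $e_1,\dots,e_r$ ($\neq e_0$, fixed by $\tau$); and $e_{r+1},\tau(e_{r+1}),\dots,e_{r+s},\tau(e_{r+s})$ (not fixed by $\tau$). Put $\widehat{e}_{r+j}=e_{r+j}+\tau(e_{r+j})$, $\widehat{E}^\dagger=\{e_1,\dots,e_r,\widehat{e}_{r+1},\dots,\widehat{e}_{r+s}\}$. Let $\mu_q(n)=\min\{\dim_{\mathbb{F}}\mathbb{F}Ge: e\text{ primitive idempotent},\ e\neq e_0\}$. The Hamming weight $\mathrm{wt}_H$ of $\sum_g a_gg$ is $|\{g:a_g\ne0\}|$, and $\mathrm{wt}_H(a,b)=\mathrm{wt}_H(a)+\mathrm{wt}_H(b)$. For $a,b\in\mathbb{F}G$, $\mathcal{C}_{a,b}=\{(sa,sb):s\in\mathbb{F}G\}$;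 $\mathcal{D}_\lambda=\{\mathcal{C}_{1,\beta}:\beta\in\mathbb{F}G,\ \beta\,\tau(\beta)=\lambda-1\}$; $\mathcal{D}_{a,b}=\{\mathcal{C}\in\mathcal{D}_\lambda:(a,b)\in\mathcal{C}\}$; $\mathcal{D}_\lambda^{\le\delta}=\{\mathcal{C}\in\mathcal{D}_\lambda: \min_{0\ne c\in\mathcal{C}}\mathrm{wt}_H(c)/(2n)\le\delta\}$. For $a\in\mathbb{F}G$, $\widehat{E}_a^\dagger=\{e\in\widehat{E}^\dagger:ea\neq0\}$ and $L_a=\bigoplus_{e\in\widehat{E}_a^\dagger}\mathbb{F}Ge$. For an integer $\ell$, $\Omega_\ell$ is the set of subspaces $J=\bigoplus_{e\in S}\mathbb{F}Ge$ with $S\subseteq\widehat{E}^\dagger$ and $\dim_{\mathbb{F}}J=\ell$. For $J\in\Omega_\ell$, $\tilde J=\mathbb{F}Ge_0+J$, $\tilde J^*=\{a\in\tilde J: L_a=J\}$, and $(\tilde J^*\times\tilde J^* )^{\le\delta}=\{(a,b)\in\tilde J^*\times\tilde J^*:\mathrm{wt}_H(a,b)\le 2n\delta\}$. *)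

(* Defs.v *)
From HB Require Import structures.
From mathcomp Require Import all_boot all_order all_algebra all_fingroup.
Set Implicit Arguments. Unset Strict Implicit. Unset Printing Implicit Defensive.
Import Order.TTheory GRing.Theory Num.Theory.
Local Open Scope ring_scope.

Section GroupAlgebra.
Variables (F : finFieldType) (gT : finGroupType) (q : nat).

(* The group algebra F G, elements sum_g a_g g encoded as coefficient functions
   g |-> a_g; F^o makes it an F-vector space ({ffun _ -> F^o} is a vectType). *)
Definition FG := {ffun gT -> F^o}.

Definition gelt (g : gT) : FG := [ffun h => if h == g then 1 else 0].

Definition gmul (a b : FG) : FG :=
  [ffun g => \sum_(h : gT) a h * b ((h^-1 * g)%g)].

Definition gscal (c : F) : FG := [ffun g => if g == 1%g then c else 0].

Definition tau (a : FG) : FG := [ffun g => (a (g^-1)%g) ^+ q].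

Definition e0 : FG := [ffun _ => (#|gT|%:R)^-1].

Definition idem (e : FG) : bool := gmul e e == e.

Definition primitive (e : FG) : bool :=
  [&& idem e, e != (0 : FG) &
   [forall f1 : FG, forall f2 : FG,
      ~~ [&& idem f1, idem f2, f1 != 0, f2 != 0, gmul f1 f2 == 0 & f1 + f2 == e]]].

Definition Ehat (x : FG) : bool :=
  [exists e : FG, [&& primitive e, e != e0, tau e == e & x == e]] ||
  [exists e : FG, [&& primitive e, tau e != e & x == e + tau e]].

Definition ideal (e : FG) : {vspace FG} := <<[seq gmul (gelt g) e | g : gT]>>%VS.

(* mu_q(n): min dimension of F G e over primitive e <> e0
   (default value n = |G| when there is no such e, i.e. n = 1) *)
Definition mu_q : nat :=
  \big[minn/#|gT|]_(e : FG | primitive e && (e != e0)) \dim (ideal e).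

Definition L_ (a : FG) : {vspace FG} :=
  (\sum_(e : FG | Ehat e && (gmul e a != (0%R : FG))) ideal e)%VS.

Definition wtH (a : FG) : nat := #|[set g : gT | a g != 0]|.
Definition wtH2 (c : FG * FG) : nat := wtH c.1 + wtH c.2.

Definition code (a b : FG) : {set FG * FG} :=
  [set (gmul s a, gmul s b) | s : FG].

(* minimum Hamming weight of the nonzero codewords (default 2n if none) *)
Definition minwt (C : {set FG * FG}) : nat :=
  \big[minn/(2 * #|gT|)%N]_(c in C | c != (0, 0)) wtH2 c.

Definition in_D (lam : F) (C : {set FG * FG}) : Prop :=
  exists beta : FG, gmul beta (tau beta) = gscal (lam - 1) /\ C = code (gscal 1) beta.

Definition sumideal (S : {set FG}) : {vspace FG} := (\sum_(e in S) ideal e)%VS.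

Definition in_Omega (l : nat) (J : {vspace FG}) : Prop :=
  exists S : {set FG}, {subset S <= Ehat} /\ J = sumideal S /\ \dim J = l.

Definition Jtilde (J : {vspace FG}) : {vspace FG} := (ideal e0 + J)%VS.

Definition in_Jstar (J : {vspace FG}) (a : FG) : bool :=
  (a \in Jtilde J) && (L_ a == J).

Definition in_Dab (lam : F) (a b : FG) (C : {set FG * FG}) : Prop :=
  in_D lam C /\ (a, b) \in C.

Definition in_Dle (R : realFieldType) (lam : F) (delta : R) (C : {set FG * FG}) : Prop :=
  in_D lam C /\ (minwt C)%:R / (2 * #|gT|)%:R <= delta.

End GroupAlgebra.

(* Main.v *)
Require Import Defs.
From HB Require Import structures.
From mathcomp Require Import all_boot all_order all_algebra all_fingroup all_field.
From mathcomp Require Import ring lra.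
Set Implicit Arguments. Unset Strict Implicit. Unset Printing Implicit Defensive.
Import Order.TTheory GRing.Theory Num.Theory.
Local Open Scope ring_scope.

Section Basic.
Variables (F : finFieldType) (gT : finGroupType).
Local Notation FG := (FG F gT).
Local Notation gmul := (@gmul F gT).

Lemma gmulA : associative gmul.
Proof.
move=> a b c; apply/ffunP=> g; rewrite !ffunE.
under [RHS]eq_bigr do rewrite ffunE big_distrl /=.
rewrite [RHS]exchange_big /=; apply: eq_bigr => k _.
rewrite ffunE big_distrr /= [RHS](reindex_inj (mulgI k)) /=.
by apply: eq_bigr => h _; rewrite mulKg mulrA invMg mulgA.
Qed.

Lemma gmul1l : left_id (gscal gT 1) gmul.
Proof.
move=> a; apply/ffunP=> g; rewrite ffunE (bigD1 1%g) //= big1 => [|h /negbTE h1].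
  by rewrite !ffunE eqxx mul1r invg1 mul1g addr0.
by rewrite ffunE h1 mul0r.
Qed.

Lemma gmulDl : left_distributive gmul +%R.
Proof.
move=> a b c; apply/ffunP=> g; rewrite !ffunE -big_split /=.
by apply: eq_bigr => h _; rewrite ffunE mulrDl.
Qed.

Lemma gone_neq0 : gscal gT 1 != 0 :> FG.
Proof. by apply/eqP => /ffunP /(_ 1%g); rewrite !ffunE eqxx; apply/eqP; exact: oner_neq0. Qed.

Hypothesis Hab : abelian [set: gT].

Lemma gcomm (x y : gT) : (x * y = y * x)%g.
Proof. exact: (centsP Hab x (in_setT x) y (in_setT y)). Qed.

Lemma gmulC : commutative gmul.
Proof.
move=> a b; apply/ffunP=> g; rewrite !ffunE.
rewrite (reindex (fun h => g * h^-1)%g) /=; last first.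
  exists (fun h => h^-1 * g)%g => h _ /=. - by rewrite invMg invgK mulgKV.
  - by rewrite invMg invgK mulgA mulgV mul1g.
apply: eq_bigr => h _; rewrite invMg invgK mulgKV mulrC.
by rewrite gcomm.
Qed.
End Basic.

Definition FGr (F : finFieldType) (gT : finGroupType) (Hab : abelian [set: gT]) := FG F gT.
Arguments FGr : clear implicits.
HB.instance Definition _ (F : finFieldType) (gT : finGroupType) (Hab : abelian [set: gT]) :=
  GRing.Zmodule.on (FGr F gT Hab).
HB.instance Definition _ (F : finFieldType) (gT : finGroupType) (Hab : abelian [set: gT]) :=
  Finite.on (FGr F gT Hab).
HB.instance Definition _ (F : finFieldType) (gT : finGroupType) (Hab : abelian [set: gT]) :=
  GRing.Lmodule.on (FGr F gT Hab).
HB.instance Definition _ (F : finFieldType) (gT : finGroupType) (Hab : abelian [set: gT]) :=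
  GRing.Zmodule_isComNzRing.Build (FGr F gT Hab) (@gmulA F gT) (@gmulC F gT Hab) (@gmul1l F gT) (@gmulDl F gT) (@gone_neq0 F gT).


Section Idem.
Variable R : finComNzRingType.
Definition idm (e : R) := e * e == e.
Definition prim (e : R) := [&& idm e, e != 0 &
   [forall f1 : R, forall f2 : R,
      ~~ [&& idm f1, idm f2, f1 != 0, f2 != 0, f1 * f2 == 0 & f1 + f2 == e]]].

Lemma idmM e f : idm e -> idm f -> idm (e * f).
Proof.
rewrite /idm => /eqP He /eqP Hf.
apply/eqP; have -> : e * f * (e * f) = (e * e) * (f * f) by ring.
by rewrite He Hf.
Qed.

Lemma prim_split e f : prim e -> idm f -> e * f = 0 \/ e * f = e.
Proof.
move=> /and3P [He _ /forallP Hp] Hf.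
have := Hp (e * f) => /forallP /(_ (e - e * f)).
have He' := He; have Hf' := Hf; move: He' Hf' => /eqP Hee /eqP Hff.
have i1 : idm (e * f) by exact: idmM.
have i2 : idm (e - e * f).
  apply/eqP; have -> : (e - e * f) * (e - e * f) = e * e - (e * e) * f - (e * e) * f + (e * e) * (f * f) by ring.
  by rewrite Hee Hff; ring.
have o : (e * f) * (e - e * f) == 0.
  apply/eqP; have -> : (e * f) * (e - e * f) = (e * e) * f - (e * e) * (f * f) by ring.
  by rewrite Hff subrr.
have s : e * f + (e - e * f) == e by rewrite addrC subrK.
rewrite i1 i2 o s /= andbT.
case: eqP => [-> | _]; first by left.
by case: eqP => [/eqP | _] //; rewrite subr_eq0 => /eqP <-; right.
Qed.

Lemma prim_idm e : prim e -> idm e. Proof. by case/and3P. Qed.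
Lemma prim_neq0 e : prim e -> e != 0. Proof. by case/and3P. Qed.

Lemma prim_orth e f : prim e -> prim f -> e != f -> e * f = 0.
Proof.
move=> Pe Pf; apply: contraNeq => ef0.
have [|Hef] := prim_split Pe (prim_idm Pf); first by move/eqP; rewrite (negbTE ef0).
have [|Hfe] := prim_split Pf (prim_idm Pe); first by rewrite mulrC => /eqP; rewrite (negbTE ef0).
by rewrite -Hef -{2}Hfe mulrC.
Qed.

Lemma prim_decomp f : idm f -> \sum_(e | prim e) e * f = f.
Proof.
move Hn : #|[set g | idm g && (g * f == g)]| => n.
elim/ltn_ind: n f Hn => n IH f Hn Hf.
have [->|fn0] := eqVneq f 0; first by rewrite big1 // => e _; rewrite mulr0.
case Pf: (prim f).
  rewrite (bigD1 f) //= big1 ?addr0; first exact/eqP.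
  by move=> e /andP [Pe nef]; apply: prim_orth.
move: Pf; rewrite /prim Hf fn0 /= => /forallPn [f1 /forallPn [f2 /negPn]].
case/and5P => I1 I2 n1 n2 /andP [/eqP o /eqP s].
have below (g : R) (h : R) : idm h -> h * f == h -> g \in [set g | idm g && (g * h == g)] -> g \in [set g | idm g && (g * f == g)].
  move=> _ hf; rewrite !inE => /andP [-> /eqP gh]; rewrite -gh -mulrA (eqP hf).
  by rewrite eqxx.
have f1f : f1 * f == f1 by rewrite -s mulrDr (eqP I1) o addr0.
have f2f : f2 * f == f2 by rewrite -s mulrDr (mulrC f2 f1) o (eqP I2) add0r.
have lt1 : (#|[set g | idm g && (g * f1 == g)%R]| < n)%N.
  rewrite -Hn; apply: proper_card; apply/properP; split.
    by apply/subsetP => g; apply: below I1 f1f.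
  exists f; first by rewrite inE; apply/andP; split; exact: Hf.
  rewrite inE Hf /= mulrC -s mulrDr (eqP I1) o addr0.
  apply: contraNneq n2 => E; apply/eqP; apply: (addrI f1); by rewrite addr0 -E.
have lt2 : (#|[set g | idm g && (g * f2 == g)%R]| < n)%N.
  rewrite -Hn; apply: proper_card; apply/properP; split.
    by apply/subsetP => g; apply: below I2 f2f.
  exists f; first by rewrite inE; apply/andP; split; exact: Hf.
  rewrite inE Hf /= mulrC -s mulrDr (mulrC f2 f1) o (eqP I2) add0r.
  apply: contraNneq n1 => E; apply/eqP; apply: (addIr f2); by rewrite add0r -E.
rewrite -{2}s -(IH _ lt1 f1 erefl I1) -(IH _ lt2 f2 erefl I2) -big_split /=.
by apply: eq_bigr => e _; rewrite -s mulrDr.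
Qed.

Lemma prim_sum1 : \sum_(e | prim e) e = 1.
Proof.
rewrite -[RHS](prim_decomp (f := 1)); last by rewrite /idm mulr1.
by apply: eq_bigr => e _; rewrite mulr1.
Qed.
End Idem.

Lemma scaleF (F : finFieldType) (a b : F) : a *: (b : F^o) = a * b. Proof. by []. Qed.

Lemma sumcF (F : finFieldType) (T : finType) (c : F) : \sum_(h : T) c = c *+ #|T|.
Proof. by rewrite -cardsT -sumr_const; apply: eq_bigl => h; rewrite inE. Qed.

Lemma bigmin_le_seq (T : eqType) (r : seq T) (P : pred T) (f : T -> nat) d e :
  e \in r -> P e -> (\big[minn/d]_(i <- r | P i) f i <= f e)%N.
Proof.
elim: r => // i r IH; rewrite inE big_cons => /orP [/eqP <-| er] Pe.
  by rewrite Pe geq_minl.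
case: (P i); last exact: IH.
exact: leq_trans (geq_minr _ _) (IH er Pe).
Qed.

Lemma bigmin_le (T : finType) (P : pred T) (f : T -> nat) d e :
  P e -> (\big[minn/d]_(i | P i) f i <= f e)%N.
Proof. by apply: bigmin_le_seq; rewrite mem_index_enum. Qed.

Section T.
Variables (F : finFieldType) (gT : finGroupType) (Hab : abelian [set: gT]).
Local Notation A := (FGr F gT Hab).
Lemma mulE (x y : A) : x * y = gmul x y. Proof. by []. Qed.
Lemma oneE : (1 : A) = gscal gT 1. Proof. by []. Qed.
Lemma primE (e : A) : primitive e = prim e. Proof. by []. Qed.

Lemma gscalE (c : F) (y : A) : y * gscal gT c = c *: y.
Proof.
apply/ffunP => g; rewrite mulE !ffunE (bigD1 g) //= big1 => [|h hg].
  by rewrite mulVg ffunE eqxx addr0 mulrC.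
rewrite ffunE; case: eqP => [E|]; last by rewrite mulr0.
by move: hg; rewrite eq_mulVg1 E eqxx.
Qed.

Lemma scal_mul (c : F) (u v : A) : (c *: u) * v = c *: (u * v).
Proof.
apply/ffunP => g; rewrite !mulE !ffunE scaler_sumr /=.
by apply: eq_bigr => h _; rewrite ffunE scalerAl.
Qed.

Lemma gelt_mul (g : gT) (x : A) : (gelt F g : A) * x = [ffun k => x (g^-1 * k)%g].
Proof.
apply/ffunP => k; rewrite mulE !ffunE (bigD1 g) //= big1 => [|h hg].
  by rewrite ffunE eqxx mul1r addr0.
by rewrite ffunE (negbTE hg) mul0r.
Qed.

Lemma mul_expand (y x : A) : y * x = \sum_g y g *: ((gelt F g : A) * x).
Proof.
apply/ffunP => k; rewrite mulE sum_ffunE ffunE.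
by apply: eq_bigr => h _; rewrite ffunE gelt_mul ffunE.
Qed.

Lemma ideal_mul (y x : A) : y * x \in ideal x.
Proof.
rewrite mul_expand; apply: memv_suml => g _; apply: memvZ.
by apply: memv_span; apply: map_f; rewrite mem_enum.
Qed.

Lemma ideal_sub (e x : A) : e * x = e -> (ideal e <= ideal x)%VS.
Proof.
move=> ex; apply/span_subvP => _ /mapP [g _ ->].
by rewrite -ex -mulE mulrA ideal_mul.
Qed.

Lemma ideal_ann (e y z : A) : y \in ideal e -> e * z = 0 -> y * z = 0.
Proof.
move=> + ez; rewrite /ideal.
set X := (X in <<X>>%VS) => /(@coord_span _ _ _ (in_tuple X)) ->.
rewrite mulr_suml big1 // => i _.
rewrite scal_mul; apply/eqP; rewrite scaler_eq0; apply/orP; right.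
have : X`_i \in X by apply: mem_nth; exact: ltn_ord.
by case/mapP => g _ ->; rewrite -mulE -mulrA ez mulr0.
Qed.
Lemma dimFG : \dim (fullv : {vspace FG F gT}) = #|gT|.
Proof. by rewrite dimvf /dim /= muln1. Qed.

Section E0.
Hypothesis Hn : (#|gT|%:R : F) != 0.
Definition E0 : A := e0 F gT.
Lemma E0E : E0 = e0 F gT. Proof. by []. Qed.

Lemma mul_e0 (y : A) : y * E0 = (\sum_h y h : F) *: E0.
Proof.
apply/ffunP => g; rewrite mulE !ffunE scaleF mulr_suml.
by apply: eq_bigr => h _; rewrite ffunE.
Qed.

Lemma e0_neq0 : E0 != 0.
Proof.
apply/eqP => /ffunP /(_ 1%g); rewrite !ffunE => /eqP; rewrite invr_eq0.
by apply/negP.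
Qed.

Lemma e0_idem : E0 * E0 = E0.
Proof.
rewrite mul_e0; apply/ffunP => g; rewrite !ffunE scaleF.
rewrite (eq_bigr (fun=> #|gT|%:R^-1)) => [|h _]; last by rewrite ffunE.
rewrite sumcF -[_^-1 *+ _]mulr_natr mulVf // mul1r.
by [].
Qed.

Lemma e0_prim : prim E0.
Proof.
rewrite /prim /idm e0_idem eqxx e0_neq0 /=; apply/forallP => f1; apply/forallP => f2.
apply/negP => /and5P [I1 I2 n1 n2 /andP [/eqP o /eqP s]].
have key (f g : A) : idm f -> f != 0 -> f * g = 0 -> f + g = E0 -> f = E0.
  move=> If0 nf fg sfg.
  have If : f * f = f := eqP If0.
  pose c : F := \sum_h f h.
  have fe : f = c *: E0 by rewrite /c -mul_e0 -sfg mulrDr If fg addr0.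
  clearbody c.
  have ff : (c * c) *: E0 = c *: E0.
    by rewrite -fe -{1}If {1}fe (scal_mul c E0 f) fe (mulrC E0) (scal_mul c E0 E0) e0_idem scalerA.
  have c0 : c != 0 by apply: contraNneq nf => c0; rewrite fe c0 scale0r.
  have : (c * c - 1 * c) *: E0 = 0 by rewrite mul1r scalerBl ff subrr.
  move/eqP; rewrite scaler_eq0 (negbTE e0_neq0) orbF -mulrBl mulf_eq0 (negbTE c0) orbF subr_eq0.
  by move/eqP => c1; rewrite fe c1 scale1r.
have e1 := key f1 f2 I1 n1 o s.
have e2 : f2 = E0.
  by apply: (key f2 f1 I2 n2); [rewrite mulrC | rewrite addrC].
by move: o; rewrite e1 e2 e0_idem => /eqP; rewrite (negbTE e0_neq0).
Qed.

Section Tau.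
Variables (p k q : nat).
Hypotheses (Hp : prime p) (Hk : (0 < k)%N) (Hq : q = (p ^ k)%N) (HF : #|F| = (q ^ 2)%N).

Lemma Hch : p \in [pchar F].
Proof. by apply: (@card_finPcharP _ p (k * 2)) => //; rewrite HF Hq expnM. Qed.

Lemma q_gt0 : (0 < q)%N. Proof. by rewrite Hq expn_gt0 prime_gt0. Qed.

Lemma frobD (x y : F) : (x + y) ^+ q = x ^+ q + y ^+ q.
Proof. by apply: exprDn_pchar; rewrite Hq pnatX pnatE // Hch. Qed.

Lemma frob0 : (0 : F) ^+ q = 0.
Proof. by rewrite expr0n; case: eqP => // q0; move: q_gt0; rewrite q0. Qed.

Lemma frob_sum (T : finType) (f : T -> F) : (\sum_i f i) ^+ q = \sum_i f i ^+ q.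
Proof. exact: (big_morph (fun x : F => x ^+ q) frobD frob0). Qed.

Lemma frob_nat m : (m%:R : F) ^+ q = m%:R.
Proof. by elim: m => [|m IH]; rewrite ?frob0 // -addn1 natrD frobD IH expr1n. Qed.

Lemma frob_frob (x : F) : (x ^+ q) ^+ q = x.
Proof. by rewrite -exprM -[(q * q)%N]/(q ^ 2)%N -HF expf_card. Qed.

Definition tauA (y : A) : A := tau q y.

Lemma tau_mul (x y : A) : tauA (x * y) = tauA x * tauA y.
Proof.
apply/ffunP => g; rewrite mulE !ffunE frob_sum.
rewrite [RHS](reindex_inj invg_inj) /=.
apply: eq_bigr => h _; rewrite !ffunE exprMn !invgK invMg.
by rewrite gcomm.
Qed.

Lemma tau_tau (y : A) : tauA (tauA y) = y.
Proof. by apply/ffunP => g; rewrite !ffunE invgK frob_frob. Qed.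

Lemma tau_e0 : tauA E0 = E0.
Proof. by apply/ffunP => g; rewrite !ffunE exprVn frob_nat. Qed.

Lemma tau0 : tauA 0 = 0.
Proof. by apply/ffunP => g; rewrite !ffunE frob0. Qed.


Lemma e_tau_orth (e : A) : prim e -> tauA e != e -> e * tauA e = 0.
Proof.
move=> Pe Ht.
have It : idm (tauA e).
  by rewrite /idm -tau_mul (eqP (@prim_idm A e Pe)).
case: (prim_split Pe It) => // H; exfalso; move/eqP: Ht; apply.
have := congr1 tauA H; rewrite tau_mul tau_tau => H2.
by rewrite -H2 mulrC H.
Qed.

Lemma neq_e0 (e : A) : tauA e != e -> e != E0.
Proof. by apply: contraNneq => ->; rewrite tau_e0. Qed.

Lemma prim_Ehat (e : A) : prim e -> e != E0 -> exists x : A, Ehat q x /\ e * x = e.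
Proof.
move=> Pe ne; case: (eqVneq (tauA e) e) => Ht.
  exists e; split; last exact: (eqP (@prim_idm A e Pe)).
  apply/orP; left; apply/existsP; exists e; apply/and4P; split => //.
  by apply/eqP; exact: Ht.
exists (e + tauA e); split.
  by apply/orP; right; apply/existsP; exists e; apply/and3P; split.
by rewrite mulrDr e_tau_orth // addr0 (eqP (@prim_idm A e Pe)).
Qed.

Lemma Ehat_e0 (x : A) : Ehat q x -> x * E0 = 0.
Proof.
case/orP => /existsP [e].
  case/and4P => Pe ne _ /eqP ->.
  exact: (@prim_orth A e E0 Pe e0_prim ne).
case/and3P => Pe nt /eqP ->.
have ne := neq_e0 nt.
have o : (e : A) * E0 = 0 := @prim_orth A e E0 Pe e0_prim ne.
rewrite mulrDl o add0r -tau_e0 -[tau q e]/(tauA e) -tau_mul o; exact: tau0.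
Qed.

Lemma mu_le (e : FG F gT) : primitive e && (e != e0 F gT) -> (mu_q F gT <= \dim (ideal e))%N.
Proof. by move=> Pe; rewrite /mu_q bigmin_le. Qed.

Lemma Ehat_mu (x : A) : Ehat q x -> (mu_q F gT <= \dim (ideal x))%N.
Proof.
case/orP => /existsP [e].
  case/and4P => Pe ne _ /eqP ->.
  by apply: mu_le; apply/andP.
case/and3P => Pe nt /eqP ->.
have ex : (e : A) * (e + tauA e) = e.
  by rewrite mulrDr (@e_tau_orth e) // addr0 (eqP (@prim_idm A e Pe)).
apply: leq_trans (mu_le (e := e) _) (dimvS (ideal_sub ex)).
by apply/andP; split => //; exact: (@neq_e0 e nt).
Qed.

Lemma sum_prim (y : A) : y = \sum_(e | prim e) y * e.
Proof. by rewrite -mulr_sumr prim_sum1 mulr1. Qed.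

Lemma decomp (y : A) : y \in Jtilde (L_ q y).
Proof.
rewrite {1}(sum_prim y); apply: memv_suml => e Pe.
case: (eqVneq e E0) => [->|ne].
  by apply: (subvP (addvSl _ _)); apply: ideal_mul.
apply: (subvP (addvSr _ _)).
have [x [Ex ex]] := prim_Ehat Pe ne.
case: (eqVneq (x * y) 0) => xy.
  by rewrite mulrC -ex -mulrA xy mulr0 mem0v.
rewrite -ex mulrA; apply: (subvP _ _ (ideal_mul _ _)).
by apply: (sumv_sup x) => //; rewrite Ex.
Qed.

Lemma zero_case (y : A) : (forall x : A, Ehat q x -> x * y = 0) -> y = y * E0.
Proof.
move=> H; rewrite {1}(sum_prim y) (bigD1 E0) ?e0_prim //= big1 ?addr0 // => e /andP [Pe ne].
have [x [Ex ex]] := prim_Ehat Pe ne.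
by rewrite mulrC -ex -mulrA H // mulr0.
Qed.

Lemma L_upper (y : A) : (\dim (L_ q y) < #|gT|)%N.
Proof.
set K := ideal (1 - E0).
have LK : (L_ q y <= K)%VS.
  apply/subv_sumP => x /andP [Ex _]; apply: ideal_sub.
  by rewrite mulrBr mulr1 (Ehat_e0 Ex) subr0.
have E0K : E0 \notin K.
  apply/negP => /(@ideal_ann _ _ E0) H.
  have : E0 * E0 = 0 by apply: H; rewrite mulrBl mul1r e0_idem subrr.
  by rewrite e0_idem => /eqP; rewrite (negbTE e0_neq0).
rewrite -dimFG; apply: leq_ltn_trans (dimvS LK) _.
rewrite ltn_neqAle dimvS ?subvf // andbT; apply: contra E0K => /eqP Kd.
have : (K == fullv)%VS by rewrite eqEdim subvf Kd leqnn.
by move/eqP ->; rewrite memvf.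
Qed.

Section Unit.
Variables (lam : F) (beta : A).
Hypotheses (Hl1 : lam != 1) (Hb : beta * tauA beta = gscal gT (lam - 1)).

Lemma unit_cancel (y : A) : y * beta = 0 -> y = 0.
Proof.
move=> H; have : y * beta * tauA beta = 0 by rewrite H mul0r.
rewrite -mulrA Hb gscalE => /eqP; rewrite scaler_eq0 subr_eq0 (negbTE Hl1) /=.
by move/eqP.
Qed.

Lemma L_eq (y : A) : L_ q (y * beta) = L_ q y.
Proof.
apply: eq_bigl => x; congr (_ && _); congr negb.
apply/eqP/eqP => H.
  by apply: unit_cancel; rewrite -mulE -mulrA mulE H.
have H2 : (x : A) * y = 0 := H.
change ((x : A) * (y * beta) = 0).
by rewrite mulrA H2 mul0r.
Qed.
End Unit.

Lemma wt_const (y : A) : y = y * E0 -> y != 0 -> wtH y = #|gT|.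
Proof.
rewrite mul_e0 => Hy y0; move: Hy; set c := (\sum_h y h : F) => Hy; clearbody c.
rewrite /wtH -cardsT.
suff -> : [set g | y g != 0] = [set: gT] by [].
apply/setP => g; rewrite !inE; apply: contraNneq y0 => yg.
move: yg; rewrite Hy !ffunE => yg.
apply/eqP; apply/ffunP => h; rewrite !ffunE; exact: yg.
Qed.

Lemma core (R : realFieldType) (delta : R) (Hd1 : delta < 1)
  (lam : F) (Hl1 : lam != 1) (C : {set FG F gT * FG F gT}) :
    in_Dle q lam delta C ->
    exists l : nat, (mu_q F gT <= l < #|gT|)%N /\
      exists J : {vspace FG F gT}, in_Omega q l J /\
        exists a b : FG F gT,
          [/\ in_Jstar q J a, in_Jstar q J b,
              (wtH2 (a, b))%:R <= (2 * #|gT|)%:R * delta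
            & in_Dab q lam a b C].
Proof.
move=> [[beta [Hbeta HC]] Hmin].
have Hb : (beta : A) * tauA beta = gscal gT (lam - 1) := Hbeta.
have n0 : (0 < #|gT|)%N by apply/card_gt0P; exists 1%g.
have n20 : (0 : R) < (2 * #|gT|)%:R by rewrite ltr0n muln_gt0 n0.
have Hdn : (2 * #|gT|)%:R * delta < (2 * #|gT|)%:R.
  by rewrite -[X in _ < X]mulr1 ltr_pM2l.
have [c /and3P [cC c0 cw]] : exists c, [&& c \in C, c != (0, 0) &
    (wtH2 c)%:R <= (2 * #|gT|)%:R * delta].
  apply/existsP; apply: contraT => /negP H; exfalso.
  have : (2 * #|gT|)%:R * delta < (minwt C)%:R.
    rewrite /minwt; elim/big_ind: _ => //.
      by move=> x y Hx Hy; rewrite /minn; case: ifP.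
    move=> c2 /andP [c2C c20]; rewrite ltNge; apply/negP => w.
    by apply: H; apply/existsP; exists c2; rewrite c2C c20 w.
  move: Hmin; rewrite ler_pdivrMr // => Hm Hlt.
  by move: (lt_le_trans Hlt Hm); rewrite mulrC ltxx.
move: cC; rewrite HC => /imsetP [s _ Ec].
have s1 : gmul s (gscal gT 1) = s by rewrite -mulE -oneE mulr1.
rewrite s1 in Ec.
pose a : A := s.
pose b : A := a * beta.
have Eb : gmul s beta = b by [].
rewrite Eb in Ec; subst c.
have Lab : L_ q b = L_ q a := L_eq Hl1 Hb a.
exists (\dim (L_ q a)); split.
  apply/andP; split; last exact: L_upper.
  have [x /andP [Ex xa]] : exists x : A, Ehat q x && (x * a != 0).
    apply/existsP; apply: contraT => /negP H; exfalso.
    have Ha : a = a * E0.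
      apply: zero_case => x Ex; apply/eqP; apply: contraT => xa.
      by case: H; apply/existsP; exists x; rewrite Ex xa.
    have Hb0 : b = b * E0 by rewrite /b -mulrA (mulrC (beta : A)) mulrA -Ha.
    have a0 : a != 0.
      apply: contraNneq c0 => a0; have a0s : s = (0 : FG F gT) := a0.
      have b0s : b = (0 : FG F gT) by rewrite /b /a a0s mul0r.
      by rewrite a0s b0s.
    have b0 : b != 0.
      by apply: contraNneq a0 => b0; apply/eqP; apply: (unit_cancel Hl1 Hb); exact: b0.
    move: cw; rewrite /wtH2 /= (wt_const Ha a0) (wt_const Hb0 b0) addnn -mul2n.
    by rewrite leNgt Hdn.
  apply: leq_trans (Ehat_mu Ex) (dimvS _).
  by apply: (sumv_sup x) => //; apply/andP; split; [exact: Ex | exact: xa].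
exists (L_ q a); split.
  exists [set e | Ehat q e && (gmul e a != 0)]; split.
    by move=> e; rewrite inE => /andP [].
  split => //; rewrite /sumideal /L_; apply: eq_bigl => e; rewrite inE.
  by [].
exists a, b; split.
- by apply/andP; split; [exact: decomp | exact: eqxx].
- by apply/andP; split; [rewrite -Lab; exact: decomp | rewrite Lab].
- by [].
split; first by exists beta.
apply/imsetP; exists s => //.
by rewrite s1.
Qed.
End Tau.
End E0.
End T.

Unset Implicit Arguments.

Theorem lemma3p11 (F : finFieldType) (gT : finGroupType) (p k q : nat)
  (Hp : prime p) (Hk : (0 < k)%N) (Hq : q = (p ^ k)%N)
  (HF : #|F| = (q ^ 2)%N)
  (Hab : abelian [set: gT]) (Hodd : odd #|gT|) (Hcop : coprime #|gT| q)
  (R : realFieldType) (delta : R)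
  (Hd0 : 0 <= delta) (Hd1 : delta <= 1 - (q%:R)^-1)
  (lam : F) (Hl0 : lam != 0) (Hl1 : lam != 1) :
  forall C : {set FG F gT * FG F gT},
    in_Dle q lam delta C ->
    exists l : nat, (mu_q F gT <= l < #|gT|)%N /\
      exists J : {vspace FG F gT}, in_Omega q l J /\
        exists a b : FG F gT,
          [/\ in_Jstar q J a, in_Jstar q J b,
              (wtH2 (a, b))%:R <= (2 * #|gT|)%:R * delta
            & in_Dab q lam a b C].
Proof.
move=> C HC.
have Hc := Hch Hp Hq HF.
have Hn : (#|gT|%:R : F) != 0.
  rewrite -(dvdn_pcharf Hc) -prime_coprime // coprime_sym.
  by move: Hcop; rewrite Hq coprime_pexpr.
have q0 : (0 < q)%N by rewrite Hq expn_gt0 prime_gt0.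
have Hd1' : delta < 1.
  have : (0 : R) < (q%:R)^-1 by rewrite invr_gt0 ltr0n.
  move=> x0; apply: le_lt_trans Hd1 _; by rewrite ltrBlDr ltrDl.
exact: (core Hab Hn Hp Hq HF Hd1' Hl1 HC).
Qed.
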